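(* Suppose $(X_k)_{k=1}^\infty$, $X$ and $Y$ are shift spaces over a finite alphabet $\mathscr{A}$ such that $\underline d^H(X_k,X)\to0$ and $\underline d^H(X_k,Y)\to0$ as $k\to\infty$. Then $\mathcal M_\sigma(X)=\mathcal M_\sigma(Y)$.
   Context: $\underline d(x,y)=\liminf_{n}\frac1n|\{0\le j<n:x_j\ne y_j\}|$ on $\mathscr{A}^{\mathbb N_0}$ (not a pseudometric: it need not satisfy the triangle inequality), and $\underline d^H(A,B)=\max\{\sup_{a\in A}\inf_{b\in B}\underline d(a,b),\sup_{b\in B}\inf_{a\in A}\underline d(a,b)\}$. $\mathcal M_\sigma(X)$ is the set of shift-invariant Borel probability measures supported on $X$. *)

(* Defs.v *)
From HB Require Import structures.
From mathcomp Require Import all_boot all_order all_algebra.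
From mathcomp Require Import all_classical all_reals all_analysis.
Set Implicit Arguments. Unset Strict Implicit. Unset Printing Implicit Defensive.
Import Order.TTheory GRing.Theory Num.Theory.
Local Open Scope classical_set_scope.
Local Open Scope ring_scope.

Section ShiftDefs.
Variable A : finType.

Definition shseq := nat -> A.

Definition shift (x : shseq) : shseq := fun n => x n.+1.

(* Open sets of the product topology (A discrete): unions of cylinders. *)
Definition shopen (U : set shseq) : Prop :=
  forall x, U x -> exists n : nat,
    forall y : shseq, (forall i, (i < n)%N -> y i = x i) -> U y.

Definition shclosed (X : set shseq) : Prop := shopen (~` X).

Definition shift_space (X : set shseq) : Prop :=
  [/\ X !=set0, shclosed X & shift @` X `<=` X].

(* The full shift as a pointed type (the alphabet is nonempty, witnessed by
   a0; the point is only needed by MathComp-Analysis' measurableType). *)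
Definition pshseq (a0 : A) := shseq.
HB.instance Definition _ (a0 : A) := Choice.on (pshseq a0).
HB.instance Definition _ (a0 : A) := isPointed.Build (pshseq a0) (fun _ => a0).

Definition borel_shseq (a0 : A) := g_sigma_algebraType (@shopen : set (set (pshseq a0))).

Definition mismatch_freq (R : realType) (x y : shseq) (n : nat) : R :=
  (count (fun j => x j != y j) (iota 0 n))%:R / n%:R.

Definition dlow (R : realType) (x y : shseq) : R :=
  limn_inf (mismatch_freq R x y).

Definition dlowH (R : realType) (X Y : set shseq) : R :=
  Num.max (sup [set (inf [set dlow R a b | b in Y]) | a in X])
          (sup [set (inf [set dlow R a b | a in X]) | b in Y]).

Definition Msigma (a0 : A) (R : realType) (X : set shseq) :
    set (probability (borel_shseq a0) R) :=
  [set mu : probability (borel_shseq a0) R |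
     (forall B : set (borel_shseq a0), measurable B ->
        mu (shift @^-1` B) = mu B)
     /\ mu (X : set (borel_shseq a0)) = 1%E].

End ShiftDefs.

Arguments Msigma {A} a0 R X.

(* Main.v *)
Require Import Defs.
From HB Require Import structures.
From mathcomp Require Import all_boot all_order all_algebra.
From mathcomp Require Import all_classical all_reals all_analysis.
From mathcomp Require Import zify ring lra.
Import Order.TTheory GRing.Theory Num.Theory numFieldNormedType.Exports.
Set Implicit Arguments. Unset Strict Implicit. Unset Printing Implicit Defensive.
Local Open Scope classical_set_scope.

Lemma sum_shift_le (q : nat -> nat) n j :
  (\sum_(i < n) q (i + j) <= \sum_(i < n + j) q i)%N.
Proof.
elim: n => [|n IH]; first by rewrite big_ord0.
rewrite big_ord_recr /= addSn big_ord_recr /=.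
by rewrite leq_add2r.
Qed.

Lemma sum_mono_bound (q : nat -> nat) k l : (k <= l)%N ->
  (\sum_(i < k) q i <= \sum_(i < l) q i)%N.
Proof.
move=> /subnKC <-; elim: (l - k)%N => [|d IH]; first by rewrite addn0.
by rewrite addnS big_ord_recr /= (leq_trans IH) // leq_addr.
Qed.

Lemma L0 (p r q : nat -> bool) n m :
  (forall i, (i < n)%N -> p i -> r i \/ exists j, (j < m)%N /\ q (i + j)) ->
  (\sum_(i < n) p i <= \sum_(i < n) r i + m * \sum_(i < n + m) q i)%N.
Proof.
move=> H.
apply: (@leq_trans (\sum_(i < n) (r i + \sum_(j < m) q (i + j)))%N).
  apply: leq_sum => i _.
  case pi: (p i) => //=.
  have [ri|[j [jm qj]]] := H i (ltn_ord i) pi.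
    by rewrite ri /= leq_addr.
  rewrite (bigD1 (Ordinal jm)) //= qj.
  by rewrite add1n addnS.
rewrite big_split /= leq_add2l exchange_big /=.
apply: (@leq_trans (\sum_(j < m) \sum_(i < n + m) q i)%N).
  apply: leq_sum => j _.
  have /leq_trans := sum_shift_le (fun k => nat_of_bool (q k)) n j; apply.
  by apply: (sum_mono_bound (fun k => nat_of_bool (q k))); rewrite leq_add2l ltnW.
by rewrite sum_nat_const card_ord.
Qed.
Section Comb.
Variable A : finType.
Implicit Types x y z : shseq A.

Definition shiftn (i : nat) (x : shseq A) : shseq A := fun j => x (i + j)%N.
Definition occ (C : set (shseq A)) x n : nat := (\sum_(i < n) `[< C (shiftn i x) >])%N.
Definition mism x y n : nat := (\sum_(i < n) (x i != y i))%N.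
Definition loc (m : nat) (C : set (shseq A)) :=
  forall x x', (forall j, (j < m)%N -> x j = x' j) -> C x -> C x'.

Lemma shiftnD i k x : shiftn i (shiftn k x) = shiftn (k + i) x.
Proof. by apply/funext => j; rewrite /shiftn addnA. Qed.

Lemma shiftnS i x : shiftn i.+1 x = Defs.shift (shiftn i x).
Proof. by apply/funext => j; rewrite /shiftn /Defs.shift addnS addSn. Qed.

Lemma inv_shiftn (Z : set (shseq A)) : @Defs.shift A @` Z `<=` Z ->
  forall i z, Z z -> Z (shiftn i z).
Proof.
move=> hZ; elim=> [|i IH] z Zz.
  by have -> : shiftn 0 z = z by apply/funext.
by rewrite shiftnS; apply: hZ; exists (shiftn i z) => //; apply: IH.
Qed.

Lemma occ_cmp m C (hC : loc m C) x z n :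
  (occ C x n <= occ C z n + m * mism x z (n + m))%N.
Proof.
rewrite /occ /mism; apply: (@L0 (fun i => `[< C (shiftn i x) >]) (fun i => `[< C (shiftn i z) >])
         (fun k => x k != z k)).
move=> i _ /asboolP Cx.
case: (pselect (exists j, (j < m)%N /\ x (i + j)%N != z (i + j)%N)) => [h|h]; first by right.
left; apply/asboolP; apply: hC Cx => j jm.
apply/eqP; apply: contrapT => /negP hne; apply: h; exists j; split => //.
Qed.

Lemma occ0 C (Z : set (shseq A)) : (forall i z, Z z -> Z (shiftn i z)) ->
  (forall z, Z z -> ~ C z) -> forall z n, Z z -> occ C z n = 0%N.
Proof.
move=> hZ hC z n Zz; rewrite /occ big1 // => i _.
by case: asboolP => // Cz; exfalso; apply: (hC (shiftn i z)) => //; apply: hZ.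
Qed.

Lemma occ_add C x n k : occ C x (n + k) = (occ C x n + occ C (shiftn n x) k)%N.
Proof.
rewrite /occ big_split_ord /=; congr (_ + _)%N.
by apply: eq_bigr => i _; rewrite shiftnD.
Qed.

Lemma occ_le C x n : (occ C x n <= n)%N.
Proof.
rewrite /occ; apply: (@leq_trans (\sum_(i < n) 1)%N).
  by apply: leq_sum => i _; case: asboolP.
by rewrite sum_nat_const card_ord muln1.
Qed.

Lemma occ_loc m C (hC : loc m C) x x' n :
  (forall j, (j < n + m)%N -> x j = x' j) -> occ C x n = occ C x' n.
Proof.
move=> hx; apply: eq_bigr => i _.
have h : forall j, (j < m)%N -> shiftn i x j = shiftn i x' j.
  move=> j jm; apply: hx; have := ltn_ord i; rewrite /=; lia.
case: asboolP => [/(hC _ _ h) Cx'|nC]; first by case: asboolP.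
case: asboolP => // Cx'; exfalso; apply: nC; apply: hC Cx' => j jm.
by rewrite h.
Qed.

End Comb.
Section Compact.
Variable A : finType.

Lemma compact_unif (Z : set (shseq A)) (P : shseq A -> nat -> Prop) c :
  shclosed Z ->
  (forall x x' n, (forall j, (j < n + c)%N -> x j = x' j) -> P x n -> P x' n) ->
  (forall z, Z z -> exists n, (0 < n)%N /\ P z n) ->
  exists M, forall z, Z z -> exists n, (0 < n <= M)%N /\ P z n.
Proof.
move=> hZ hP hex.
apply: contrapT => Hn.
have bad : forall M, exists z, Z z /\ forall n, (0 < n <= M)%N -> ~ P z n.
  move=> M; apply: contrapT => hM; apply: Hn; exists M => z Zz.
  apply: contrapT => hz; apply: hM; exists z; split => // n nM Pn.
  by apply: hz; exists n.
have [zs hzs] := choice bad.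
pose d := zs 0%N 0%N.
pose S (u : seq A) := forall N, exists M, (N <= M)%N /\
   (forall j, (j < size u)%N -> zs M j = nth d u j).
have Sext : forall u, S u -> exists a, S (rcons u a).
  move=> u Su; apply: contrapT => hn.
  have hN : forall a, exists N, forall M, (N <= M)%N ->
      ~ (forall j, (j < size (rcons u a))%N -> zs M j = nth d (rcons u a) j).
    move=> a; apply: contrapT => ha; apply: hn; exists a => N.
    apply: contrapT => hb; apply: ha; exists N => M NM hM; apply: hb.
    by exists M.
  have [Nf hNf] := choice hN.
  have [M [NM hM]] := Su (\max_(a : A) Nf a).
  pose a := zs M (size u).
  apply: (hNf a M).
    by apply: leq_trans NM; apply: (@leq_bigmax _ (fun a => Nf a)).
  move=> j; rewrite size_rcons ltnS leq_eqVlt => /orP [/eqP ->|ju].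
    by rewrite nth_rcons ltnn eqxx.
  by rewrite nth_rcons ju hM.
pose next u := odflt d [pick a | `[< S (rcons u a) >]].
have Snext : forall u, S u -> S (rcons u (next u)).
  move=> u /Sext [a Sa]; rewrite /next.
  case: pickP => [b /asboolP //|/(_ a)].
  by move/asboolP: Sa => ->.
pose fix pre n := if n is n'.+1 then rcons (pre n') (next (pre n')) else [::].
have Spre : forall n, S (pre n).
  elim=> [|n IH] /=; last exact: Snext.
  by move=> N; exists N; split.
have size_pre : forall n, size (pre n) = n.
  by elim=> [|n IH] //=; rewrite size_rcons IH.
pose zl : shseq A := fun j => next (pre j).
have nth_pre : forall n j, (j < n)%N -> nth d (pre n) j = zl j.
  elim=> [//|n IH] j /=; rewrite nth_rcons size_pre ltnS leq_eqVlt.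
  case/orP => [/eqP ->|jn]; first by rewrite ltnn eqxx.
  by rewrite jn IH.
have agree : forall n N, exists M, (N <= M)%N /\ forall j, (j < n)%N -> zs M j = zl j.
  move=> n N; have [M [NM hM]] := Spre n N; exists M; split => // j jn.
  by rewrite hM ?size_pre // nth_pre.
have Zzl : Z zl.
  apply: contrapT => nZ; have [n hn] := hZ zl nZ.
  have [M [_ hM]] := agree n 0%N.
  by apply: (hn (zs M) hM); case: (hzs M).
have [n [n0 Pn]] := hex zl Zzl.
have [M [nM hM]] := agree (n + c)%N n.
case: (hzs M) => _ hb; apply: (hb n); first by rewrite n0 nM.
by apply: hP Pn => j jn; rewrite hM.
Qed.

End Compact.
Section Reals.
Variable R : realType.
Variable A : finType.
Local Open Scope ring_scope.

Lemma greedy C (Z : set (shseq A)) (r : R) M : 0 <= r ->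
  (forall i z, Z z -> Z (shiftn i z)) ->
  (forall z, Z z -> exists n, (0 < n <= M)%N /\ (occ C z n)%:R <= r * n%:R) ->
  forall N z, Z z -> (occ C z N)%:R <= r * N%:R + M%:R.
Proof.
move=> r0 hZ hM N; elim/ltn_ind: N => N IH z Zz.
case: (leqP N M) => hNM.
  apply: (@le_trans _ _ (N%:R)); first by rewrite ler_nat occ_le.
  have : (N%:R <= M%:R :> R) by rewrite ler_nat.
  have : 0 <= r * N%:R by rewrite mulr_ge0.
  lra.
have [n [/andP [n0 nM] hn]] := hM z Zz.
have nN : (n <= N)%N by apply: leq_trans nM (ltnW hNM).
have hlt : (N - n < N)%N by rewrite ltn_subrL n0 (leq_ltn_trans _ hNM).
have h := IH (N - n)%N hlt (shiftn n z) (hZ n z Zz).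
rewrite -{1}(subnKC nN) occ_add natrD.
move: h; rewrite natrB // mulrBr; move: hn; lra.
Qed.
End Reals.
Section Dlow.
Variable R : realType.
Variable A : finType.
Local Open Scope ring_scope.
Implicit Types x y : shseq A.

Lemma count_iota_sum (p : pred nat) n : count p (iota 0 n) = (\sum_(i < n) p i)%N.
Proof.
elim: n => [|n IH]; first by rewrite big_ord0.
have -> : iota 0 n.+1 = iota 0 n ++ [:: n] by rewrite -addn1 iotaD.
by rewrite count_cat IH big_ord_recr /= addn0.
Qed.

Lemma mfE x y n : mismatch_freq R x y n = (mism x y n)%:R / n%:R.
Proof. by rewrite /mismatch_freq count_iota_sum. Qed.

Lemma mism_le x y n : (mism x y n <= n)%N.
Proof.
rewrite /mism; apply: (@leq_trans (\sum_(i < n) 1)%N).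
  by apply: leq_sum => i _; case: (_ != _).
by rewrite sum_nat_const card_ord muln1.
Qed.

Lemma mf_ge0 x y n : 0 <= mismatch_freq R x y n.
Proof. by rewrite mfE divr_ge0. Qed.

Lemma mf_le1 x y n : mismatch_freq R x y n <= 1.
Proof.
rewrite mfE; case: n => [|n]; first by rewrite invr0 mulr0.
by rewrite ler_pdivrMr ?ltr0Sn // mul1r ler_nat mism_le.
Qed.

Lemma mf_bnd x y : bounded_fun (mismatch_freq R x y).
Proof.
rewrite /=; apply: filterS (nbhs_pinfty_ge (r:=1) (real1 R)) => M M1 n _ /=.
by rewrite ger0_norm ?mf_ge0 //; apply: le_trans (mf_le1 x y n) M1.
Qed.

Let u x y := mismatch_freq R x y.

Lemma infs_ge0 x y N : 0 <= infs (u x y) N.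
Proof.
rewrite /infs /=; apply: lb_le_inf; first by exists (u x y N); exists N => /=.
by move=> _ [k _ <-]; apply: mf_ge0.
Qed.

Lemma infs_lb x y : has_lbound (range (u x y)).
Proof. by exists 0 => _ [k _ <-]; apply: mf_ge0. Qed.

Lemma dlowE x y : dlow R x y = sup (range (infs (u x y))).
Proof. exact: limn_infE (mf_bnd x y). Qed.

Lemma infs_le_dlow x y N : infs (u x y) N <= dlow R x y.
Proof.
rewrite dlowE; apply: ub_le_sup; last by exists N.
exact: bounded_fun_has_ubound_infs (mf_bnd x y).
Qed.

Lemma dlow_ge0 x y : 0 <= dlow R x y.
Proof. exact: le_trans (infs_ge0 x y 0) (infs_le_dlow x y 0). Qed.

Lemma dlow_le1 x y : dlow R x y <= 1.
Proof.
rewrite dlowE; apply: ge_sup; first by exists (infs (u x y) 0); exists 0%N.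
move=> _ [n _ <-]; apply: le_trans (mf_le1 x y n).
rewrite /infs /=; apply: ge_inf; last by exists n => /=.
exact: has_lbound_sdrop (infs_lb x y) n.
Qed.

Lemma dlow_lt x y e : dlow R x y < e ->
  forall N, exists n, (N <= n)%N /\ mismatch_freq R x y n < e.
Proof.
move=> he N; have := le_lt_trans (infs_le_dlow x y N) he.
rewrite /infs /= => /inf_lt [|_ [n /= Nn <-] hn]; last by exists n.
by exists (u x y N); exists N => /=.
Qed.

End Dlow.
Section Haus.
Variable R : realType.
Variable A : finType.
Local Open Scope ring_scope.

Lemma dlowH_lt (Z W : set (shseq A)) e : Z !=set0 -> W !=set0 ->
  dlowH R Z W < e ->
  (forall a, Z a -> exists2 b, W b & dlow R a b < e) /\
  (forall b, W b -> exists2 a, Z a & dlow R a b < e).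
Proof.
move=> [z0 Zz0] [w0 Ww0]; rewrite /dlowH gt_max => /andP [h1 h2]; split.
  move=> a Za.
  have lbS : forall a', has_lbound [set dlow R a' b | b in W].
    by move=> a'; exists 0 => _ [b _ <-]; apply: dlow_ge0.
  have : inf [set dlow R a b | b in W] <=
         sup [set inf [set dlow R a b | b in W] | a in Z].
    apply: ub_le_sup; last by exists a.
    exists 1 => _ [a' Za' <-]; apply: le_trans (dlow_le1 R a' w0).
    by apply: ge_inf; [apply: lbS | exists w0].
  move/le_lt_trans/(_ h1) => /inf_lt [|_ [b Wb <-] hb]; last by exists b.
  by exists (dlow R a w0); exists w0.
move=> b Wb.
have lbS : forall b', has_lbound [set dlow R a b' | a in Z].
  by move=> b'; exists 0 => _ [a _ <-]; apply: dlow_ge0.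
have : inf [set dlow R a b | a in Z] <=
       sup [set inf [set dlow R a b | a in Z] | b in W].
  apply: ub_le_sup; last by exists b.
  exists 1 => _ [b' Wb' <-]; apply: le_trans (dlow_le1 R z0 b').
  by apply: ge_inf; [apply: lbS | exists z0].
move/le_lt_trans/(_ h2) => /inf_lt [|_ [a Za <-] ha]; last by exists a.
by exists (dlow R z0 b); exists z0.
Qed.

Lemma cvg_ex (f g : nat -> R) e : f @ \oo --> (0:R) -> g @ \oo --> (0:R) -> 0 < e ->
  exists k, f k < e /\ g k < e.
Proof.
move=> hf hg e0.
have h1 := @cvgr_dist_lt _ _ _ _ _ f (0:R) hf e e0.
have h2 := @cvgr_dist_lt _ _ _ _ _ g (0:R) hg e e0.
have {}h1 : \forall t \near \oo, `|0 - f t| < e by apply: h1.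
have {}h2 : \forall t \near \oo, `|0 - g t| < e by apply: h2.
have [k [/= {}h1 {}h2]] := filter_ex (filterI h1 h2); exists k.
move: h1 h2; rewrite !sub0r !normrN !ltr_norml => /andP [_ ->] /andP [_ ->]; done.
Qed.

End Haus.
Section Transfer.
Variable R : realType.
Variable A : finType.
Local Open Scope ring_scope.

Lemma transfer (Z W : set (shseq A)) m C (hC : loc m C) (r : R) M e :
  0 <= r -> 0 < e -> shclosed Z -> (forall i z, Z z -> Z (shiftn i z)) ->
  (forall w N, W w -> (occ C w N)%:R <= r * N%:R + M%:R) ->
  (forall z, Z z -> exists2 w, W w & dlow R z w < e) ->
  exists M', forall N z, Z z ->
    (occ C z N)%:R <= (r + (2 * m + 1)%:R * e) * N%:R + M'%:R.
Proof.
move=> r0 e0 cZ iZ hW hZW.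
set r' := r + (2 * m + 1)%:R * e.
have r'0 : 0 <= r' by rewrite /r' addr_ge0 // mulr_ge0 // ltW.
suff [M' hM'] : exists M', forall z, Z z ->
    exists n, (0 < n <= M')%N /\ (occ C z n)%:R <= r' * n%:R.
  by exists M' => N z Zz; apply: (greedy r'0 iZ hM').
apply: (@compact_unif _ Z (fun z n => (occ C z n)%:R <= r' * n%:R) m) => //.
  by move=> x x' n hx; rewrite (occ_loc hC hx).
move=> z Zz; have [w Ww hw] := hZW z Zz.
pose K := (Num.trunc (M%:R / e)).+1.
have hK : M%:R < e * K%:R.
  by rewrite mulrC -ltr_pdivrMr //; apply: truncnS_gt.
have [n [Nn hn]] := dlow_lt hw (K + 2 * m + 1)%N.
exists (n - m)%N; split; first by lia.
set n' := (n - m)%N.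
have nn' : n = (n' + m)%N by rewrite /n'; lia.
have h1 := occ_cmp hC z w n'; rewrite -nn' in h1.
have h2 := hW w n' Ww.
have n0 : (0 < n)%N by lia.
have h3 : (mism z w n)%:R < e * n%:R.
  by move: hn; rewrite mfE ltr_pdivrMr ?ltr0n.
have h4 : (K <= n')%N by rewrite /n'; lia.
have h5 : (m <= n')%N by rewrite /n'; lia.
move: h1 h4 h5; rewrite -!(ler_nat R) natrD natrM => h1 h4 h5.
have hnn : n%:R = n'%:R + m%:R :> R by rewrite nn' natrD.
have hm : 0 <= m%:R :> R by [].
have he : e * K%:R <= e * n'%:R by rewrite ler_wpM2l // ltW.
have h6 : m%:R * (mism z w n)%:R <= m%:R * (e * n%:R) :> R.
  by rewrite ler_wpM2l // ltW.
have h7 : m%:R * e * m%:R <= m%:R * e * n'%:R :> R.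
  by rewrite ler_wpM2l // mulr_ge0 // ltW.
rewrite /r' natrD natrM.
rewrite hnn in h6.
nra.
Qed.

End Transfer.
Section Meas.
Variables (R : realType) (A : finType) (a0 : A).
Local Open Scope ring_scope.

Lemma open_meas (U : set (shseq A)) : shopen U ->
  measurable (U : set (borel_shseq a0)).
Proof. by move=> hU; apply: sub_sigma_algebra. Qed.

Lemma loc_pre_open m (C : set (shseq A)) i : loc m C -> shopen (shiftn i @^-1` C).
Proof.
move=> hC x Cx; exists (i + m)%N => y hy; apply: hC Cx => j jm.
rewrite /shiftn hy //; lia.
Qed.

Lemma memE_test (E : set (borel_shseq a0)) x : (x \in E) = `[< E x >].
Proof. by []. Qed.

End Meas.
Section Meas2.
Variables (R : realType) (A : finType) (a0 : A).
Local Open Scope ring_scope.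

Lemma measure_bound (mu : probability (borel_shseq a0) R)
  (inv : forall B : set (borel_shseq a0), measurable B ->
     mu (@Defs.shift A @^-1` B) = mu B)
  (X : set (shseq A)) (cX : shclosed X) (mX1 : mu (X : set (borel_shseq a0)) = 1%E)
  m (C : set (shseq A)) (hC : loc m C) (r : R) M :
  (forall x N, X x -> (occ C x N)%:R <= r * N%:R + M%:R) ->
  (mu (C : set (borel_shseq a0)) <= r%:E)%E.
Proof.
move=> hb.
have mX : measurable (X : set (borel_shseq a0)).
  by rewrite -[X]setCK; apply: measurableC; apply: open_meas.
pose E i : set (borel_shseq a0) := shiftn i @^-1` C.
have mE i : measurable (E i) by apply: open_meas; apply: loc_pre_open hC.
have muE i : mu (E i) = mu C.
  elim: i => [|i IH].
    congr (mu _); apply/seteqP; split => x; rewrite /E /=;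
      by have -> : shiftn 0 x = x by apply/funext.
  have -> : E i.+1 = @Defs.shift A @^-1` (E i).
    apply/seteqP; split => x; rewrite /E /=;
    by have -> : shiftn i (Defs.shift x) = shiftn i.+1 x
      by apply/funext => j; rewrite /shiftn /Defs.shift addSn.
  by rewrite inv // IH.
have nX : mu (~` (X : set (borel_shseq a0))) = 0%E.
  by rewrite probability_setC // mX1 subee.
have muEX i : mu (E i `&` X) = mu C.
  rewrite -(muE i) (measureDI mu (mE i) mX).
  rewrite [Z0 in (Z0 + _)%E](_ : _ = 0%E) ?add0e //.
  apply/eqP; rewrite eq_le measure_ge0 andbT -nX.
  apply: le_measure; rewrite ?inE.
  - exact: measurableD.
  - exact: measurableC.
  - by move=> x [_].
have C0 : (0 <= mu (C : set (borel_shseq a0)))%E by apply: measure_ge0.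
have C1 : (mu (C : set (borel_shseq a0)) <= 1)%E.
  by rewrite -(muE 0%N); apply: probability_le1.
set c := fine (mu (C : set (borel_shseq a0))).
have hc : mu (C : set (borel_shseq a0)) = c%:E.
  by rewrite fineK // ge0_fin_numE // (le_lt_trans C1) // ltry.
have key : forall N, N%:R * c <= r * N%:R + M%:R.
  move=> N.
  have : (\sum_(i < N) mu (E i `&` X) <= (r * N%:R + M%:R)%:E)%E.
    under eq_bigr => i _ do rewrite -(integral_indic mu mX (mE i)).
    rewrite -ge0_integral_sum //; try (by move=> i; apply/measurable_realfun.measurable_EFinP; apply: measurable_realfun.measurable_indic);
      try (by move=> i x _; rewrite lee_fin indicE).
    apply: (@le_trans _ _ (\int[mu]_(x in X) cst (r * N%:R + M%:R)%:E x)%E); last first.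
      rewrite integral_cst // [Z0 in (_ * Z0)%E](_ : _ = 1%E) ?mule1 //.
    apply: ge0_le_integral => //.
    - by move=> x _; apply: sume_ge0 => i _; rewrite lee_fin indicE.
    - apply: emeasurable_sum => i.
      by apply/measurable_realfun.measurable_EFinP; apply: measurable_realfun.measurable_indic.
    - move=> x Xx; rewrite sumEFin lee_fin /=.
      apply: le_trans (hb x N Xx).
      rewrite /occ natr_sum; apply: ler_sum => i _.
      by rewrite indicE.
  under eq_bigr => i _ do rewrite muEX.
  rewrite hc sumEFin lee_fin sumr_const card_ord.
  by rewrite mulr_natl.
rewrite hc lee_fin; apply: contrapT => /negP; rewrite -ltNge => rc.
pose N := (Num.trunc (M%:R / (c - r))).+1.
have hN : M%:R < (c - r) * N%:R.
  by rewrite mulrC -ltr_pdivrMr ?subr_gt0 //; apply: truncnS_gt.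
have := key N; move: hN; rewrite mulrBl.
lra.
Qed.

End Meas2.
Section Main.
Variables (R : realType) (A : finType) (a0 : A).
Local Open Scope ring_scope.

Lemma dlow_sym (x y : shseq A) : dlow R x y = dlow R y x.
Proof.
rewrite /dlow; congr limn_inf; apply/funext => n; rewrite /mismatch_freq.
by congr (_%:R / _); apply: eq_count => j; rewrite eq_sym.
Qed.

Definition Cy (Y : set (shseq A)) m : set (shseq A) :=
  fun x => forall y, Y y -> exists j, (j < m)%N /\ x j != y j.

Lemma Cy_loc Y m : loc m (Cy Y m).
Proof.
move=> x x' hx Cx y Yy; have [j [jm hj]] := Cx y Yy.
by exists j; split => //; rewrite -hx.
Qed.

Lemma Cy_Y Y m y : Y y -> ~ Cy Y m y.
Proof. by move=> Yy /(_ y Yy) [j [_]]; rewrite eqxx. Qed.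

Lemma Msub (Xs : nat -> set (shseq A)) (X Y : set (shseq A)) :
  (forall k, shift_space (Xs k)) -> shift_space X -> shift_space Y ->
  (fun k => dlowH R (Xs k) X) @ \oo --> (0 : R) ->
  (fun k => dlowH R (Xs k) Y) @ \oo --> (0 : R) ->
  Msigma a0 R X `<=` Msigma a0 R Y.
Proof.
move=> hXs [nX cX iX] [nY cY iY] cvX cvY mu [inv mX1]; split => //.
have iXn := inv_shiftn iX; have iYn := inv_shiftn iY.
have C0 : forall m, mu (Cy Y m : set (borel_shseq a0)) = 0%E.
  move=> m; apply/eqP; rewrite eq_le measure_ge0 andbT.
  apply/lee_addgt0Pr => e' e'0; rewrite add0e.
  pose e := e' / (4 * m + 2)%:R.
  have e0 : 0 < e by rewrite divr_gt0 // ltr0n addn2.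
  have [k [hk1 hk2]] := cvg_ex cvX cvY e0.
  have [nXk cXk iXk] := hXs k; have iXkn := inv_shiftn iXk.
  have [hKY _] := dlowH_lt nXk nY hk2.
  have [_ hKX] := dlowH_lt nXk nX hk1.
  have hW1 : forall w N, Y w -> (occ (Cy Y m) w N)%:R <= 0 * N%:R + (0%N)%:R :> R.
    by move=> w N Yw; rewrite (occ0 iYn (@Cy_Y Y m)) // mul0r addr0.
  have [M1 hM1] := transfer (@Cy_loc Y m) (lexx (0:R)) e0 cXk iXkn hW1 hKY.
  have r10 : 0 <= (0 + (2 * m + 1)%:R * e) :> R by rewrite add0r mulr_ge0 // ltW.
  have hKX' : forall z, X z -> exists2 w, Xs k w & dlow R z w < e.
    by move=> z Xz; have [w Ww hw] := hKX z Xz; exists w => //; rewrite dlow_sym.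
  have hW2 : forall w N, Xs k w -> (occ (Cy Y m) w N)%:R <=
      (0 + (2 * m + 1)%:R * e) * N%:R + M1%:R :> R.
    by move=> w N Ww; apply: hM1.
  have [M2 hM2] := transfer (@Cy_loc Y m) r10 e0 cX iXn hW2 hKX'.
  apply: le_trans (measure_bound inv cX mX1 (@Cy_loc Y m) (fun x N Xx => hM2 N x Xx)) _.
  rewrite lee_fin.
  change (0 + ((2 * m + 1)%N)%:R * e + ((2 * m + 1)%N)%:R * e <= e').
  rewrite /e; change ((4 * m + 2)%:R : R) with (((4 * m + 2)%N)%:R : R).
  have ht : ((2 * m + 1)%N)%:R != 0 :> R by rewrite pnatr_eq0 addn1.
  have h42 : ((4 * m + 2)%N)%:R = 2 * ((2 * m + 1)%N)%:R :> R.
    by rewrite -natrM; congr (_%:R); lia.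
  rewrite h42.
  suff -> : 0 + ((2 * m + 1)%N)%:R * (e' / (2 * ((2 * m + 1)%N)%:R)) +
     ((2 * m + 1)%N)%:R * (e' / (2 * ((2 * m + 1)%N)%:R)) = e' by [].
  field; apply/eqP; have hm : 0 <= m%:R :> R by apply: ler0n.
  lra.
have Copen : forall m, shopen (Cy Y m).
  move=> m x Cx; exists m => y hy; apply: (@Cy_loc Y m) Cx => j jm.
  by rewrite hy.
have mY : measurable (Y : set (borel_shseq a0)).
  by rewrite -[Y]setCK; apply: measurableC; apply: open_meas.
have hsub : ~` Y `<=` \bigcup_m Cy Y m.
  move=> x nYx; have [n hn] := cY x nYx; exists n => // y Yy.
  apply: contrapT => hne; apply: (hn y) => // i ilt.
  apply/eqP; apply: contrapT => /negP h; apply: hne; exists i; split => //.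
  by rewrite eq_sym.
have [N [mN N0 sN]] : mu.-negligible (\bigcup_m (Cy Y m : set (borel_shseq a0))).
  apply: negligible_bigcup => m; exists (Cy Y m); split => //.
  - exact: open_meas.
  - exact: C0.
have nY0 : mu (~` (Y : set (borel_shseq a0))) = 0%E.
  apply/eqP; rewrite eq_le measure_ge0 andbT -N0.
  apply: le_measure; rewrite ?inE //; first exact: measurableC.
  by move=> x /hsub /sN.
have := measureDI mu (@measurableT _ (borel_shseq a0)) mY.
rewrite setTD setTI [Z0 in (Z0 + _)%E](_ : _ = 0%E) ?add0e; last exact: nY0.
move=> h.
by rewrite -(probability_setT mu); apply: esym; exact: h.
Qed.
End Main.

Unset Implicit Arguments.
Local Open Scope ring_scope.

Theorem mainTheorem12 (R : realType) (A : finType) (a0 : A)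
  (Xs : nat -> set (shseq A)) (X Y : set (shseq A)) :
  (forall k, shift_space (Xs k)) -> shift_space X -> shift_space Y ->
  (fun k => dlowH R (Xs k) X) @ \oo --> (0 : R) ->
  (fun k => dlowH R (Xs k) Y) @ \oo --> (0 : R) ->
  Msigma a0 R X = Msigma a0 R Y.
Proof.
move=> hXs hX hY cX cY; rewrite eqEsubset; split; exact: Msub.
Qed.
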